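(* Let $n=2$, $E=\{p\in\Delta_2:p_1,p_2\in\mathbb Q\}$, and $\Theta=(\overline{\Delta}_2)^E$ with the topology of pointwise convergence. Let $\nu_0$ be the infinite product of the uniform distribution on $\overline{\Delta}_2$ (so the values $\pi(p)$, $p\in E$, are i.i.d. uniform). Let $\delta>0$ be rational and define $\mu(0)=(\frac12,\frac12)$, $\mu(t+1)=\left(\frac{\mu_1(t)}{1+\delta\mu_2(t)},\frac{(1+\delta)\mu_2(t)}{1+\delta\mu_2(t)}\right)$. Then $\widehat V(t)=\frac{\mu_2(t)}{\mu_2(0)}\left(1-\frac12\frac{\delta}{1+\delta}\right)^t$ and, with $V^*(t)=\max_{\pi\in\Theta}V_\pi(t)$, $\lim_{t\to\infty}\frac1t\log\frac{\widehat V(t)}{V^*(t)}=\log\left(1-\frac12\frac\delta{1+\delta}\right)<0$.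
   Context: $\Delta_2=\{p\in(0,1)^2:p_1+p_2=1\}$, $\overline{\Delta}_2$ its closure. Relative value of a portfolio map $\pi:E\to\overline{\Delta}_2$: $V_\pi(0)=1$, $V_\pi(t+1)=V_\pi(t)\sum_{i=1}^2\pi_i(\mu(t))\mu_i(t+1)/\mu_i(t)$. $\widehat V(t)=\int_\Theta V_\pi(t)\,d\nu_0(\pi)$ is the relative value of Cover's portfolio $\widehat\pi(t)=\int\pi(\mu(t))\,d\nu_t(\pi)$, where $\nu_t(B)=\frac1{\widehat V(t)}\int_BV_\pi(t)\,d\nu_0(\pi)$. *)

(* Defs.v *)
From HB Require Import structures.
From mathcomp Require Import all_boot all_order all_algebra.
From mathcomp Require Import all_classical all_reals all_analysis.
Set Implicit Arguments. Unset Strict Implicit. Unset Printing Implicit Defensive.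
Import Order.TTheory GRing.Theory Num.Theory.
Import numFieldTopology.Exports numFieldNormedType.Exports.
Local Open Scope ring_scope.
Local Open Scope classical_set_scope.

(* E = { p in Delta_2 : p_1, p_2 rational }.  A point p = (p_1, 1 - p_1) of the
   open simplex with rational coordinates is encoded by its first coordinate
   p_1 in Q, 0 < p_1 < 1. *)
Definition E := {q : rat | (0 < q < 1)%R}.

(* A portfolio map pi : E -> closure(Delta_2) is encoded by its first coordinate
   f : E -> R, i.e. pi(p) = (f p, 1 - f p); it lies in the closed simplex iff
   0 <= f p <= 1 for all p.  The sigma-algebra on E -> R is the product
   sigma-algebra (generated by the coordinate maps). *)
Definition theta_gen (R : realType) : set (set (E -> R)) :=
  \bigcup_(p in [set: E]) preimage_set_system (@setT (E -> R)) (fun f : E -> R => f p) (@measurable _ R).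

Arguments theta_gen R : clear implicits.

Definition Theta (R : realType) := g_sigma_algebraType (theta_gen R).

Definition Theta_set (R : realType) : set (Theta R) :=
  [set f : Theta R | forall p : E, 0 <= f p <= 1].

Arguments Theta_set R : clear implicits.

(* nu0 = infinite product of the uniform distribution on closure(Delta_2):
   the coordinates pi_1(p), p in E, are i.i.d. uniform on [0,1]
   (equivalently pi(p) is uniform on the segment closure(Delta_2)).
   Stated through the finite-dimensional distributions, which determine the
   product measure on the product sigma-algebra. *)
Definition iid_uniform (R : realType) (nu0 : probability (Theta R) R) : Prop :=
  forall (s : seq E) (B : E -> set R), uniq s -> (forall p, measurable (B p)) ->
    nu0 [set f : Theta R | forall p, p \in s -> B p (f p)] =
    (\prod_(p <- s) uniform_prob (@ltr01 R) (B p))%E.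

Definition pi1 (R : realType) (f : E -> R) (q : rat) : R :=
  match (insub q : option E) with Some e => f e | None => 0 end.

Fixpoint mu (delta : rat) (t : nat) : rat * rat :=
  match t with
  | 0 => (1/2, 1/2)
  | t'.+1 => let m := mu delta t' in
      (m.1 / (1 + delta * m.2), (1 + delta) * m.2 / (1 + delta * m.2))
  end.

Fixpoint V (R : realType) (delta : rat) (f : E -> R) (t : nat) : R :=
  match t with
  | 0 => 1
  | t'.+1 => V delta f t' *
      (pi1 f (mu delta t').1 * ratr ((mu delta t).1 / (mu delta t').1)
       + (1 - pi1 f (mu delta t').1) * ratr ((mu delta t).2 / (mu delta t').2))
  end.

Definition Vhat (R : realType) (delta : rat) (nu0 : probability (Theta R) R) (t : nat)
  : \bar R := (\int[nu0]_(f in Theta_set R) (V delta f t)%:E)%E.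

Definition Vstar (R : realType) (delta : rat) (t : nat) : R :=
  sup [set V delta f t | f in Theta_set R].

Arguments Vstar R delta t : clear implicits.

(* Main.v *)
Require Import Defs.
From HB Require Import structures.
From mathcomp Require Import all_boot all_order all_algebra.
From mathcomp Require Import all_classical all_reals all_analysis.
From mathcomp Require Import measurable_realfun.
From mathcomp Require Import ring lra.
Import Order.TTheory GRing.Theory Num.Theory.
Import numFieldTopology.Exports numFieldNormedType.Exports.
Local Open Scope ring_scope.
Local Open Scope classical_set_scope.

Lemma mu_prop (delta : rat) t : 0 < delta ->
  0 < (mu delta t).1 /\ 0 < (mu delta t).2 /\ (mu delta t).1 + (mu delta t).2 = 1.
Proof.
move=> d0; elim: t => [|t [h1 [h2 h3]]] /=; first by split.
have D0 : 0 < 1 + delta * (mu delta t).2 by rewrite addr_gt0 // mulr_gt0.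
split; first by rewrite divr_gt0.
split; first by rewrite divr_gt0 // mulr_gt0 // addr_gt0.
have h1' : (mu delta t).1 = 1 - (mu delta t).2 by rewrite -h3 addrK.
rewrite h1'. field. by rewrite gt_eqF.
Qed.

Lemma mu1_lt (delta : rat) t : 0 < delta -> (mu delta t.+1).1 < (mu delta t).1.
Proof.
move=> d0; have [h1 [h2 h3]] := @mu_prop delta t d0 => /=.
rewrite ltr_pdivrMr ?addr_gt0 ?mulr_gt0 //.
by rewrite ltr_pMr // ltrDl mulr_gt0.
Qed.

Lemma mu1_decr (delta : rat) k t : 0 < delta -> (k < t)%N -> (mu delta t).1 < (mu delta k).1.
Proof.
move=> d0; elim: t => // t IH; rewrite ltnS leq_eqVlt => /orP[/eqP->|kt].
  exact: mu1_lt.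
exact: lt_trans (@mu1_lt delta t d0) (IH kt).
Qed.

Definition e0 : E := @exist rat _ (1/2) erefl.
Definition ep (delta : rat) t : E := insubd e0 (mu delta t).1.

Lemma mu_in (delta : rat) t : 0 < delta -> (0 < (mu delta t).1 < 1).
Proof.
move=> d0; have [h1 [h2 h3]] := @mu_prop delta t d0.
by rewrite h1 /= -h3 ltrDl.
Qed.

Lemma val_ep (delta : rat) t : 0 < delta -> val (ep delta t) = (mu delta t).1.
Proof. by move=> d0; rewrite /ep insubdK //; exact: (@mu_in delta t d0). Qed.

Lemma pi1_ep (R : realType) (delta : rat) (f : E -> R) t : 0 < delta ->
  pi1 f (mu delta t).1 = f (ep delta t).
Proof.
move=> d0; rewrite /pi1; case: insubP => [u _ hu|]; last by rewrite (@mu_in delta t d0).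
by congr f; apply: val_inj; rewrite hu val_ep.
Qed.

Lemma ep_neq (delta : rat) k t : 0 < delta -> (k < t)%N -> ep delta k != ep delta t.
Proof.
move=> d0 kt; apply/negP => /eqP/(congr1 val); rewrite !val_ep // => h.
by have := @mu1_decr delta k t d0 kt; rewrite h ltxx.
Qed.

Definition gfun (R : realType) (delta : rat) (x : R) : R := 1 + ratr delta - ratr delta * x.

Fixpoint Kr (delta : rat) t : rat := match t with
  | 0 => 1 | t'.+1 => Kr delta t' / (1 + delta * (mu delta t').2) end.

Fixpoint Pg (R : realType) (delta : rat) (f : E -> R) t : R := match t with
  | 0 => 1 | t'.+1 => @Pg R delta f t' * @gfun R delta (f (ep delta t')) end.

Lemma V_eq (R : realType) (delta : rat) (f : E -> R) t : 0 < delta ->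
  V delta f t = ratr (Kr delta t) * @Pg R delta f t.
Proof.
move=> d0; elim: t => [|t IH] /=; first by rewrite rmorph1 mulr1.
have [h1 [h2 h3]] := @mu_prop delta t d0.
have D0 : 1 + delta * (mu delta t).2 != 0 by rewrite gt_eqF // addr_gt0 // mulr_gt0.
have -> : (mu delta t).1 / (1 + delta * (mu delta t).2) / (mu delta t).1
   = 1 / (1 + delta * (mu delta t).2) by field; rewrite D0 gt_eqF.
have -> : (1 + delta) * (mu delta t).2 / (1 + delta * (mu delta t).2) / (mu delta t).2
   = (1 + delta) / (1 + delta * (mu delta t).2) by field; rewrite D0 gt_eqF.
rewrite pi1_ep // IH /gfun.
rewrite !(rmorphM, rmorphD, fmorphV, rmorph1) /=.
ring.
Qed.

Lemma M_eq (delta : rat) t : 0 < delta ->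
  (mu delta t).2 / (mu delta 0).2 = Kr delta t * (1 + delta) ^+ t.
Proof.
move=> d0; elim: t => [|t IH] /=; first by rewrite mulr1 divff.
have [h1 [h2 h3]] := @mu_prop delta t d0.
have D0 : 1 + delta * (mu delta t).2 != 0 by rewrite gt_eqF // addr_gt0 // mulr_gt0.
rewrite exprS; move: IH => /= IH.
have -> : (1 + delta) * (mu delta t).2 / (1 + delta * (mu delta t).2) / (1 / 2)
  = ((mu delta t).2 / (1/2)) * ((1 + delta) / (1 + delta * (mu delta t).2)) by field; rewrite D0.
rewrite IH; field; by rewrite D0.
Qed.

Lemma measurable_coord (R : realType) (p : E) :
  measurable_fun setT (fun f : Theta R => f p).
Proof.
move=> _ Y mY.
apply: sub_gen_smallest.
exists p => //.
by exists Y.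
Qed.


Definition cyl (R : realType) (s : seq E) (B : E -> set R) : set (Theta R) :=
  [set f | forall p, p \in s -> B p (f p)].
Arguments cyl {R}.

Lemma cyl_cons (R : realType) p s (B : E -> set R) :
  cyl (p :: s) B = (fun f : Theta R => f p) @^-1` B p `&` cyl s B.
Proof.
apply/seteqP; split => f /=.
  by move=> h; split; [apply: h; rewrite mem_head | move=> q qs; apply: h; rewrite inE qs orbT].
by move=> [h1 h2] q; rewrite inE => /orP[/eqP->//|]; exact: h2.
Qed.

Lemma measurable_cyl (R : realType) s (B : E -> set R) :
  (forall p, measurable (B p)) -> measurable (cyl s B).
Proof.
move=> mB; elim: s => [|p s IH].
  by rewrite (_ : cyl _ _ = setT) //; apply/seteqP; split => f //= _ q.
rewrite cyl_cons; apply: measurableI => //.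
by rewrite -[X in measurable X]setTI; exact: measurable_coord.
Qed.

Definition Sn (R : realType) (n : nat) : set (Theta R) :=
  match (pickle_inv n : option E) with
  | Some e => (fun f : Theta R => f e) @^-1` `[0, 1]
  | None => setT end.

Lemma Theta_setE (R : realType) : Theta_set R = \bigcap_n Sn R n.
Proof.
apply/seteqP; split => f /=.
  move=> h n _; rewrite /Sn.
  case: (pickle_inv n) => [e|] //=.
  have := h e; by rewrite in_itv /=.
move=> h p; have := h (pickle p) I; rewrite /Sn pickleK_inv /=.
by rewrite in_itv.
Qed.

Lemma measurable_Sn (R : realType) n : measurable (Sn R n).
Proof.
rewrite /Sn; case: pickle_inv => // e.
by rewrite -[X in measurable X]setTI; exact: measurable_coord.
Qed.

Lemma measurable_Theta_set (R : realType) : measurable (Theta_set R).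
Proof. rewrite Theta_setE; apply: bigcapT_measurable => n; exact: measurable_Sn. Qed.

Lemma uniform_outside (R : realType) : uniform_prob (@ltr01 R) (~` `[0, 1]) = 0%E.
Proof.
rewrite /uniform_prob integral_uniform_pdf.
by rewrite setICl integral_set0.
Qed.

Import HBNNSimple.
Local Open Scope ereal_scope.

Lemma transfer_nnsfun d d' (T : measurableType d) (Y : measurableType d') (R : realType)
  (m : {measure set T -> \bar R}) (D : set T) (phi : T -> Y) (rho : T -> R)
  (nu : {measure set Y -> \bar R}) (c : \bar R) (g : {nnsfun Y >-> R}) :
  measurable D -> measurable_fun D phi -> measurable_fun D rho ->
  (forall x, D x -> (0 <= rho x)%R) -> 0 <= c ->
  (forall A, measurable A -> \int[m]_(x in D `&` phi @^-1` A) (rho x)%:E = c * nu A) ->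
  \int[m]_(x in D) ((g (phi x))%:E * (rho x)%:E) = c * \int[nu]_y (g y)%:E.
Proof.
move=> mD mphi mrho rho0 c0 H.
rewrite integralT_nnsfun sintegralE ge0_mule_fsumr; last first.
  move=> y; have [y0|y0] := ltP y 0%R; last by rewrite mule_ge0.
  rewrite (_ : _ @^-1` _ = set0) ?measure0 ?mule0 //.
  apply/seteqP; split => x //= gx; have := @fun_ge0 _ _ g x.
  by move: gx => /= ->; rewrite leNgt y0.
under eq_integral => x _.
  rewrite fimfunE -fsumEFin// ge0_mule_fsuml; last first.
    by move=> i; rewrite EFinM nnfun_muleindic_ge0.
  over.
rewrite ge0_integral_fsum //; last 2 first.
- move=> i; apply: emeasurable_funM; last exact/measurable_EFinP.
  apply/measurable_EFinP; apply: measurable_funM => //.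
  apply: measurableT_comp mphi.
  exact: measurable_indic.
- move=> i x Dx; rewrite EFinM mule_ge0 ?nnfun_muleindic_ge0 //.
  by rewrite lee_fin rho0.
apply: eq_fsbigr => y /[!inE] -[x0 _ gx0].
have y0 : (0 <= y)%R by rewrite -gx0 (@fun_ge0 _ _ g).
under eq_integral do rewrite EFinM -muleA.
rewrite ge0_integralZl //.
- rewrite muleCA -(H _ (measurable_sfunP g (measurable_set1 y))).
  rewrite integral_mkcondr; congr (_ * _); apply: eq_integral => x _.
  by rewrite epatch_indic /= muleC.
- apply: emeasurable_funM; last exact/measurable_EFinP.
  apply/measurable_EFinP; apply: measurableT_comp mphi.
  exact: measurable_indic.
- by move=> x Dx; rewrite mule_ge0 ?lee_fin ?rho0.
Qed.

Lemma transfer d d' (T : measurableType d) (Y : measurableType d') (R : realType)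
  (m : {measure set T -> \bar R}) (D : set T) (phi : T -> Y) (rho : T -> R)
  (nu : {measure set Y -> \bar R}) (c : \bar R) (h : Y -> \bar R) :
  measurable D -> measurable_fun D phi -> measurable_fun D rho ->
  (forall x, D x -> (0 <= rho x)%R) -> 0 <= c -> c \is a fin_num ->
  (forall A, measurable A -> \int[m]_(x in D `&` phi @^-1` A) (rho x)%:E = c * nu A) ->
  measurable_fun setT h -> (forall y, 0 <= h y) ->
  \int[m]_(x in D) (h (phi x) * (rho x)%:E) = c * \int[nu]_y h y.
Proof.
move=> mD mphi mrho rho0 c0 cfin H mh h0.
pose h_ := nnsfun_approx measurableT mh.
transitivity (limn (fun n => \int[m]_(x in D) ((h_ n (phi x))%:E * (rho x)%:E))).
  rewrite -monotone_convergence//=.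
  - apply: eq_integral => x /[!inE] Dx; apply/esym/cvg_lim => //=.
    apply: cvgeZr; first by [].
    exact: (cvg_nnsfun_approx measurableT mh (fun y _ => h0 y) (I : setT (phi x))).
  - move=> n; apply: emeasurable_funM; last exact/measurable_EFinP.
    apply/measurable_EFinP; apply: measurableT_comp mphi.
    exact: measurable_funTS.
  - by move=> n x Dx; rewrite mule_ge0 ?lee_fin ?rho0.
  - move=> x Dx a b ab; rewrite lee_wpmul2r ?lee_fin ?rho0 //.
    exact/lefP/nd_nnsfun_approx.
rewrite [X in _ = c * X](_ : _ = limn (fun n => \int[nu]_y (h_ n y)%:E)); last first.
  rewrite -monotone_convergence//=.
  - apply: eq_integral => y _; apply/esym/cvg_lim => //=.
    exact: (cvg_nnsfun_approx measurableT mh (fun y _ => h0 y) (I : setT y)).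
  - by move=> n; exact/measurable_EFinP.
  - by move=> n y _; rewrite lee_fin.
  - by move=> y _ a b ab; rewrite lee_fin; exact/lefP/nd_nnsfun_approx.
rewrite -limeMl //.
  by congr (limn _); apply/funext => n; exact: transfer_nnsfun.
apply/ereal_nondecreasing_is_cvgn => a b ab; apply: ge0_le_integral => //=.
- by move=> ? _; rewrite lee_fin.
- exact/measurable_EFinP.
- exact/measurable_EFinP.
- by move=> ? _; rewrite lee_fin; exact/lefP/nd_nnsfun_approx.
Qed.

Local Close Scope ereal_scope.
Local Open Scope ereal_scope.

Lemma int_g (R : realType) (a : R) : (0 <= a)%R ->
  \int[lebesgue_measure]_(x in `[0%R, 1%R]) (1 + a - a * x)%:E = (1 + a / 2)%:E.
Proof.
move=> a0.
have c1 : continuous (fun x : R => 1 + a - a * x)%R.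
  move=> x; apply: cvgB; first exact: cvg_cst.
  by apply: cvgM; [exact: cvg_cst|exact: cvg_id].
have c2 : continuous (fun x : R => 1 + a * x)%R.
  move=> x; apply: cvgD; first exact: cvg_cst.
  by apply: cvgM; [exact: cvg_cst|exact: cvg_id].
have mI : measurable (`[0%R, 1%R] : set R) by [].
have H1 : forall x : R, `[0%R, 1%R] x -> (0 <= 1 + a - a * x)%R.
  move=> x; rewrite /= in_itv /= => /andP[x0 x1].
  rewrite -addrA addr_ge0 // subr_ge0 -[leRHS]mulr1 ler_wpM2l //.
have H2 : forall x : R, `[0%R, 1%R] x -> (0 <= 1 + a * x)%R.
  move=> x; rewrite /= in_itv /= => /andP[x0 x1].
  by rewrite addr_ge0 // mulr_ge0.
set I := \int[lebesgue_measure]_(x in _) _.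
have IJ : I = \int[lebesgue_measure]_(x in `[0%R, 1%R]) (1 + a * x)%:E.
  rewrite /I integration_by_substitution_onem //; last 2 first.
    by rewrite ler01 lexx.
    exact: (@continuous_subspaceT R R _ _ c1).
  rewrite unstable.onem1; apply: eq_integral => x _; congr (_%:E).
  rewrite /unstable.onem; ring.
have Isum : I + I = (2 + a)%:E.
  have m1 : measurable_fun (`[0%R, 1%R] : set R) (fun x : R => (1 + a - a * x)%R).
    by apply: measurable_funTS; exact: continuous_measurable_fun.
  have m2 : measurable_fun (`[0%R, 1%R] : set R) (fun x : R => (1 + a * x)%R).
    by apply: measurable_funTS; exact: continuous_measurable_fun.
  rewrite [X in _ + X]IJ /I -ge0_integralD //; try solve [exact/measurable_EFinP
    | by move=> x /H1; rewrite lee_fin | by move=> x /H2; rewrite lee_fin].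
  rewrite (eq_integral (fun=> (2 + a)%:E)); last first.
    move=> x _; rewrite -EFinD; congr (_%:E).
    ring.
  rewrite integral_cst //.
  have L : lebesgue_measure (`[0%R, 1%R] : set R) = 1.
    rewrite lebesgue_measure_itv /= lte_fin ltr01.
    by rewrite oppr0 adde0.
  rewrite -[X in _ = X]mule1; congr (_ * _); exact: L.
have I0 : 0 <= I by apply: integral_ge0 => x /H1; rewrite lee_fin.
move: Isum I0; case: (I) => [x| |] //.
rewrite -EFinD => -[h] _; congr (_%:E); lra.
Qed.

Definition hfun (R : realType) (a : R) (y : R) : R :=
  (\1_(`[0%R, 1%R] : set R) y * (1 + a - a * y))%R.
Arguments hfun {R}.

Lemma hfun_ge0 (R : realType) (a : R) y : (0 <= a)%R -> (0 <= hfun a y)%R.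
Proof.
move=> a0; rewrite /hfun indicE.
case: (boolP (_ \in _)) => [yI|_]; last by rewrite mul0r.
rewrite mul1r; move: yI; rewrite inE /= in_itv /= => /andP[y0 y1].
by rewrite -addrA addr_ge0 // subr_ge0 -[leRHS]mulr1 ler_wpM2l.
Qed.

Lemma measurable_hfun (R : realType) (a : R) : measurable_fun setT (hfun a).
Proof.
apply: measurable_funM; first exact: measurable_indic.
apply: continuous_measurable_fun.
move=> x; apply: cvgB; first exact: cvg_cst.
by apply: cvgM; [exact: cvg_cst|exact: cvg_id].
Qed.

Lemma int_unif (R : realType) (a : R) : (0 <= a)%R ->
  \int[uniform_prob (@ltr01 R)]_y (hfun a y)%:E = (1 + a / 2)%:E.
Proof.
move=> a0; have mh : measurable_fun setT (fun y => (hfun a y)%:E).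
  by apply/measurable_EFinP; exact: measurable_hfun.
rewrite integral_uniform //; last by move=> x; rewrite lee_fin hfun_ge0.
rewrite subr0 invr1 mul1e -int_g //; apply: eq_integral => x.
by rewrite inE /hfun indicE => xI; rewrite mem_set // mul1r.
Qed.

Local Close Scope ereal_scope.
Local Open Scope ereal_scope.

Definition Yl (R : realType) := measurable_structure_g_sigma_algebraType__canonical__measurable_structure_Measurable
            (T:=lebesgue_stieltjes_measure_ocitv_type__canonical__classical_sets_Pointed
                  R)
            (R.-ocitv).-measurable.

Fixpoint PI (R : realType) (delta : rat) (f : E -> R) t : R := match t with
  | 0 => 1%R | t'.+1 => (@PI R delta f t' * hfun (ratr delta) (f (ep delta t')))%R end.
Arguments PI {R}.

Lemma PI_ge0 (R : realType) (delta : rat) (f : E -> R) t : (0 < delta)%R -> (0 <= PI delta f t)%R.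
Proof.
move=> d0; elim: t => //= t IH; rewrite mulr_ge0 // hfun_ge0 //.
by rewrite ler0q ltW.
Qed.

Lemma measurable_PI (R : realType) (delta : rat) t :
  measurable_fun setT (fun f : Theta R => PI delta f t).
Proof.
elim: t => [|t IH] /=; first exact: measurable_cst.
apply: measurable_funM => //.
apply: measurableT_comp (measurable_coord R (ep delta t)).
exact: measurable_hfun.
Qed.

Lemma cyl_int (R : realType) (delta : rat) (nu0 : probability (Theta R) R) :
  (0 < delta)%R -> iid_uniform nu0 -> forall t s (B : E -> set R),
  (forall p, measurable (B p)) -> uniq s -> (forall k, (k < t)%N -> ep delta k \notin s) ->
  \int[nu0]_(f in cyl s B) (PI delta f t)%:E =
    nu0 (cyl s B) * ((1 + ratr delta / 2) ^+ t)%:E.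
Proof.
move=> d0 iid; elim=> [|t IH] s B mB us disj.
  rewrite /= expr0 mule1 (eq_integral (cst 1)) // integral_cst ?mul1e //.
  exact: measurable_cyl.
have a0 : (0 <= ratr delta :> R)%R by rewrite ler0q ltW.
have nt : ep delta t \notin s by apply: disj.
under eq_integral do rewrite /= EFinM muleC.
rewrite (@transfer _ _ (Theta R) (Yl R) R nu0 (cyl s B) (fun f : Theta R => (f (ep delta t) : Yl R))
   (fun f => PI delta f t) (uniform_prob (@ltr01 R))
   (nu0 (cyl s B) * ((1 + ratr delta / 2) ^+ t)%:E) (fun y => (hfun (ratr delta) y)%:E)).
- by rewrite int_unif // -muleA -EFinM exprSr.
- exact: measurable_cyl.
- by apply: measurable_funTS; exact: (measurable_coord R (ep delta t)).
- by apply: measurable_funTS; exact: measurable_PI.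
- by move=> x _; exact: PI_ge0.
- by rewrite mule_ge0 // lee_fin exprn_ge0 // addr_ge0 // divr_ge0.
- by rewrite fin_numM // fin_num_measure //; exact: measurable_cyl.
- move=> A mA.
  pose B' := fun p => if p == ep delta t then A else B p.
  have mB' : forall p, measurable (B' p).
    move=> p; rewrite /B'; case: (p == ep delta t); [exact: mA | exact: mB].
  have -> : cyl s B `&` (fun f : Theta R => f (ep delta t)) @^-1` A = cyl (ep delta t :: s) B'.
    rewrite cyl_cons setIC; apply/seteqP; split => f /= [h1 h2]; split.
    + by rewrite /B' eqxx.
    + move=> p ps; rewrite /B'; case: eqP => [pe|_]; last exact: h2.
      by move: nt; rewrite -pe ps.
    + by move: h1; rewrite /B' eqxx.
    + move=> p ps; have := h2 p ps; rewrite /B'; case: eqP => [pe|//].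
      by move: nt; rewrite -pe ps.
  rewrite IH //; last 2 first.
  + by rewrite /= nt.
  + move=> k kt; rewrite inE negb_or ep_neq //= disj //.
    exact: ltnW.
  rewrite (iid (ep delta t :: s) B') // ?(iid s B) //; last by rewrite /= nt.
  rewrite big_cons {1}/B' eqxx.
  rewrite (eq_big_seq (fun p => uniform_prob (@ltr01 R) (B p))); last first.
    move=> p ps; rewrite /B'; case: eqP => // pe.
    by move: nt; rewrite -pe ps.
  by rewrite [RHS]muleC muleA.
- by apply/measurable_EFinP; exact: measurable_hfun.
- by move=> y; rewrite lee_fin hfun_ge0.
Qed.

Local Close Scope ereal_scope.
Local Open Scope ereal_scope.

Lemma negl_Theta (R : realType) (nu0 : probability (Theta R) R) :
  iid_uniform nu0 -> nu0.-negligible (~` Theta_set R).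
Proof.
move=> iid; rewrite Theta_setE setC_bigcap.
apply: negligible_bigcup => n.
apply/negligibleP; first by apply: measurableC; exact: measurable_Sn.
rewrite /Sn; case: (pickle_inv n) => [e|]; last by rewrite setCT measure0.
have -> : ~` ((fun f : Theta R => f e) @^-1` `[0%R, 1%R]) =
    cyl [:: e] (fun=> ~` (`[0%R, 1%R] : set R)).
  apply/seteqP; split => f /=.
    by move=> h p; rewrite inE => /eqP ->.
  by move=> h; apply: h; rewrite mem_head.
have Hi := iid [:: e] (fun=> ~` (`[0%R, 1%R] : set R)) isT (fun _ => measurableC (measurable_itv _)).
by rewrite big_seq1 uniform_outside in Hi; exact: Hi.
Qed.

Lemma int_Theta (R : realType) (nu0 : probability (Theta R) R) (h : Theta R -> \bar R) :
  iid_uniform nu0 -> measurable_fun setT h -> (forall f, 0 <= h f) ->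
  \int[nu0]_(f in Theta_set R) h f = \int[nu0]_f h f.
Proof.
move=> iid mh h0; rewrite integral_mkcond.
apply: ge0_ae_eq_integral => //.
- apply/(measurable_restrictT _ (measurable_Theta_set R)).
  exact: measurable_funTS.
- by move=> x _; rewrite patchE; case: ifP.
- suff : nu0.-negligible (~` [set x | [set: Theta R] x -> (h \_ (Theta_set R)) x = h x]) by [].
  have [A [mA A0 sA]] := @negl_Theta R nu0 iid.
  exists A; split => // x /= H; apply: sA => Tx; apply: H => _.
  by rewrite patchE mem_set.
Qed.

Local Close Scope ereal_scope.

Arguments Pg {R}.
Arguments gfun {R}.

Lemma Kr_gt0 (delta : rat) t : 0 < delta -> 0 < Kr delta t.
Proof.
move=> d0; elim: t => //= t IH.
have [h1 [h2 h3]] := @mu_prop delta t d0.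
by rewrite divr_gt0 // addr_gt0 // mulr_gt0.
Qed.

Lemma Pg_PI (R : realType) (delta : rat) (f : E -> R) t :
  Theta_set R f -> Pg delta f t = PI delta f t.
Proof.
move=> Tf; elim: t => //= t ->; congr (_ * _).
rewrite /hfun /gfun indicE mem_set ?mul1r //.
by have := Tf (ep delta t); rewrite /= in_itv.
Qed.

Lemma Pg_bound (R : realType) (delta : rat) (f : E -> R) t : 0 < delta ->
  Theta_set R f -> 0 <= Pg delta f t <= (1 + ratr delta) ^+ t.
Proof.
move=> d0 Tf; have a0 : (0 < ratr delta :> R) by rewrite ltr0q.
elim: t => [|t /andP[IH1 IH2]] /=; first by rewrite lexx ler01.
have /andP[x0 x1] := Tf (ep delta t).
have g0 : 0 <= gfun delta (f (ep delta t)).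
  rewrite /gfun -addrA addr_ge0 // subr_ge0 -[leRHS]mulr1 ler_wpM2l //; exact: ltW.
have g1 : gfun delta (f (ep delta t)) <= 1 + ratr delta.
  by rewrite /gfun lerBlDr lerDl mulr_ge0 // ltW.
rewrite mulr_ge0 //= exprSr ler_pM //.
Qed.

Lemma Pg0 (R : realType) (delta : rat) t :
  Pg delta (fun _ : E => 0 : R) t = (1 + ratr delta) ^+ t.
Proof. by elim: t => //= t ->; rewrite /gfun mulr0 subr0 exprSr. Qed.

Lemma Vstar_eq (R : realType) (delta : rat) t : 0 < delta ->
  Vstar R delta t = ratr (Kr delta t) * (1 + ratr delta) ^+ t.
Proof.
move=> d0.
have K0 : (0 <= ratr (Kr delta t) :> R) by rewrite ler0q ltW // Kr_gt0.
have T0 : Theta_set R (fun _ : E => 0 : R) by move=> p; rewrite lexx ler01.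
have ub : ubound [set V delta f t | f in Theta_set R] (ratr (Kr delta t) * (1 + ratr delta) ^+ t).
  move=> _ [f Tf <-]; rewrite V_eq // ler_wpM2l //.
  by have /andP[] := @Pg_bound R delta f t d0 Tf.
have inS : [set V delta f t | f in Theta_set R] (ratr (Kr delta t) * (1 + ratr delta) ^+ t).
  by exists (fun _ : E => 0 : R) => //; rewrite V_eq // Pg0.
apply/le_anti; apply/andP; split.
  by apply: ge_sup => //; exists (ratr (Kr delta t) * (1 + ratr delta) ^+ t).
apply: sup_upper_bound => //; split; first by exists (ratr (Kr delta t) * (1 + ratr delta) ^+ t).
by exists (ratr (Kr delta t) * (1 + ratr delta) ^+ t).
Qed.

Lemma Vhat_eq (R : realType) (delta : rat) (nu0 : probability (Theta R) R) t :
  0 < delta -> iid_uniform nu0 ->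
  Vhat delta nu0 t = (ratr (Kr delta t) * (1 + ratr delta / 2) ^+ t)%:E.
Proof.
move=> d0 iid; rewrite /Vhat.
have K0 : (0 <= ratr (Kr delta t) :> R) by rewrite ler0q ltW // Kr_gt0.
rewrite (eq_integral (fun f : Theta R => (ratr (Kr delta t))%:E * (PI delta f t)%:E)%E); last first.
  by move=> f; rewrite inE => Tf; rewrite V_eq // Pg_PI // EFinM.
have mPI : measurable_fun setT (fun f : Theta R => (PI delta f t)%:E).
  by apply/measurable_EFinP; exact: measurable_PI.
rewrite ge0_integralZl //; last 3 first.
- exact: measurable_Theta_set.
- exact: measurable_funTS.
- by move=> f _; rewrite lee_fin PI_ge0.
rewrite int_Theta //; last by move=> f; rewrite lee_fin PI_ge0.
have := @cyl_int R delta nu0 d0 iid t [::] (fun _ => setT) (fun _ => measurableT) isT (fun _ _ => isT).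
rewrite (_ : cyl [::] _ = setT); last by apply/seteqP; split => f //= _ p.
by rewrite probability_setT mul1e => ->; rewrite -EFinM.
Qed.

Theorem proposition3p7 (R : realType) (delta : rat) (nu0 : probability (Theta R) R) :
  0 < delta -> iid_uniform nu0 ->
  let c : R := 1 - 2^-1 * (ratr delta / (1 + ratr delta)) in
  (forall t : nat,
     Vhat delta nu0 t = (ratr ((mu delta t).2 / (mu delta 0).2) * c ^+ t)%:E) /\
  ((fun t : nat => t%:R^-1 * ln (fine (Vhat delta nu0 t) / Vstar R delta t))
     @ \oo --> ln c) /\
  ln c < 0.
Proof.
move=> d0 iid c.
have a0 : (0 < ratr delta :> R) by rewrite ltr0q.
have D0 : (1 + ratr delta :> R) != 0 by rewrite gt_eqF // addr_gt0.
have cdef : c = (1 + ratr delta / 2) / (1 + ratr delta) by rewrite /c; field.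
have c0 : 0 < c by rewrite cdef divr_gt0 // addr_gt0 // divr_gt0.
have c1 : c < 1.
  rewrite cdef ltr_pdivrMr ?addr_gt0 // mul1r ltrD2l.
  by rewrite ltr_pdivrMr // ltr_pMr // ltr1n.
split.
  move=> t; rewrite Vhat_eq // M_eq // rmorphM rmorphXn rmorphD rmorph1 /=.
  congr (_%:E); rewrite -[RHS]mulrA -exprMn cdef; congr (_ * _ ^+ _); field; exact: D0.
split; last by apply: ln_lt0; rewrite c0 c1.
rewrite -(cvg_shiftn 1).
have E : forall n : nat, (n + 1)%:R^-1 * ln (fine (Vhat delta nu0 (n + 1)) / Vstar R delta (n + 1))
   = ln c.
  move=> n; rewrite Vhat_eq // Vstar_eq //=.
  have K0 : (ratr (Kr delta (n + 1)) :> R) != 0 by rewrite gt_eqF // ltr0q Kr_gt0.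
  have -> : ratr (Kr delta (n + 1)) * (1 + ratr delta / 2) ^+ (n + 1) /
      (ratr (Kr delta (n + 1)) * (1 + ratr delta) ^+ (n + 1)) = c ^+ (n + 1).
    rewrite cdef exprMn exprVn; field; rewrite K0 andbT; exact: expf_neq0.
  by rewrite lnXn // mulrC -[ln c *+ _]mulr_natr mulfK // pnatr_eq0 addn1.
rewrite (eq_cvg _ _ E); exact: cvg_cst.
Qed.
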